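(* Let $\alpha\in(0,1]$ and let $d\ge 144/\alpha^2$. Let $G$ be a bipartite $d$-regular graph with parts $V_1,V_2$, $|V_1|=|V_2|=n$, such that for all nonempty $A\subseteq V_1$ and $B\subseteq V_2$, $\bigl|e(A,B)-\tfrac{d}{n}|A||B|\bigr|<\lambda\sqrt{|A||B|}$ with $\lambda=2\sqrt{d-1}$. Suppose $U\subseteq V_1$ and $W\subseteq V_2$ satisfy $|U|=|W|=\alpha n$, $\deg(w,U)\ge\alpha d/3$ for every $w\in W$ and $\deg(u,W)\ge\alpha d/3$ for every $u\in U$. Then $G[U,W]$ contains a perfect matching.
   Context: $e(A,B)$ is the number of edges between $A$ and $B$; $\deg(v,S)$ is the number of neighbours of $v$ in $S$; $G[U,W]$ is the bipartite subgraph of $G$ induced between $U$ and $W$. *)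

(* Defs.v *)
From HB Require Import structures.
From mathcomp Require Import all_boot all_order all_algebra.
Set Implicit Arguments. Unset Strict Implicit. Unset Printing Implicit Defensive.

(* A bipartite graph with parts T1 (= V1) and T2 (= V2) is given by its
   adjacency relation adj : T1 -> T2 -> bool (edges only go between parts). *)

Definition e_between (T1 T2 : finType) (adj : T1 -> T2 -> bool)
  (A : {set T1}) (B : {set T2}) : nat :=
  #|[set p : T1 * T2 | [&& p.1 \in A, p.2 \in B & adj p.1 p.2]]|.

Definition deg1 (T1 T2 : finType) (adj : T1 -> T2 -> bool) (u : T1) (W : {set T2}) : nat :=
  #|[set w in W | adj u w]|.

Definition deg2 (T1 T2 : finType) (adj : T1 -> T2 -> bool) (w : T2) (U : {set T1}) : nat :=
  #|[set u in U | adj u w]|.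

Definition has_perfect_matching (T1 T2 : finType) (adj : T1 -> T2 -> bool)
  (U : {set T1}) (W : {set T2}) : Prop :=
  exists f : T1 -> T2,
    [/\ {in U &, injective f}, f @: U = W & forall u, u \in U -> adj u (f u)].

(* Main.v *)
Require Import Defs.
From HB Require Import structures.
From mathcomp Require Import all_boot all_order all_algebra.
From mathcomp Require Import zify ring lra.
Import Order.TTheory GRing.Theory Num.Theory.

Section Hall.
Variables (T1 T2 : finType) (adj : T1 -> T2 -> bool).

Definition nbh (W : {set T2}) (S : {set T1}) :=
  [set w in W | [exists u in S, adj u w]].

Lemma nbh_sub W S : nbh W S \subset W.
Proof. by apply/subsetP=> w; rewrite inE => /andP[]. Qed.

Lemma hall (w0 : T2) k : forall (U : {set T1}) (W : {set T2}), (#|U| <= k)%N ->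
  (forall S : {set T1}, S \subset U -> (#|S| <= #|nbh W S|)%N) ->
  exists f : T1 -> T2, {in U &, injective f} /\
    (forall u, u \in U -> (f u \in W) && adj u (f u)).
Proof.
elim: k => [|k IH] U W hU hH.
  exists (fun _ => w0); split => [u1 u2|u].
    by move: hU; rewrite leqn0 => /eqP/cards0_eq ->; rewrite inE.
  by move: hU; rewrite leqn0 => /eqP/cards0_eq ->; rewrite inE.
case: (boolP [exists S : {set T1}, [&& S \subset U, S != set0, S != U &
            (#|nbh W S| <= #|S|)%N]]).
  case/existsP => S0 /and4P[sS0 nS0 pS0 cS0].
  have pr : S0 \proper U by rewrite properEneq pS0.
  have [g [ginj gP]] : exists g : T1 -> T2, {in S0 &, injective g} /\
      (forall u, u \in S0 -> (g u \in W) && adj u (g u)).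
    apply: IH; first by have := proper_card pr; lia.
    by move=> S sS; apply: hH; apply: subset_trans sS sS0.
  set N0 := nbh W S0.
  have cN0 : (#|N0| <= #|S0|)%N := cS0.
  have [h [hinj hP]] : exists h : T1 -> T2, {in U :\: S0 &, injective h} /\
      (forall u, u \in U :\: S0 -> (h u \in W :\: N0) && adj u (h u)).
    apply: IH.
      rewrite cardsD (setIidPr sS0).
      have : (0 < #|S0|)%N by rewrite card_gt0.
      lia.
    move=> S sS.
    have hU' : S :|: S0 \subset U.
      rewrite subUset sS0 andbT; apply: subset_trans sS (subsetDl _ _).
    have := hH _ hU'.
    have -> : #|S :|: S0| = (#|S| + #|S0|)%N.
      rewrite cardsU.
      suff -> : S :&: S0 = set0 by rewrite cards0 subn0.
      apply/setP=> x; rewrite !inE; apply/negP=> /andP[xS xS0].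
      by move: (subsetP sS x xS); rewrite !inE xS0.
    have sub : nbh W (S :|: S0) \subset nbh (W :\: N0) S :|: N0.
      apply/subsetP=> w; rewrite !inE => /andP[wW /existsP[u /andP[]]].
      rewrite inE => /orP[uS|uS0] auw.
        case: [exists u in S0, adj u w] => /=; rewrite wW //= orbF.
        by apply/existsP; exists u; rewrite uS auw.
      by rewrite wW /= orbC; apply/orP; left; apply/existsP; exists u; rewrite uS0.
    have := subset_leq_card sub.
    have := leq_card_setU (nbh (W :\: N0) S) N0.
    case=> + _; lia.
  exists (fun u => if u \in S0 then g u else h u); split.
    move=> u1 u2 u1U u2U /=.
    case: (boolP (u1 \in S0)) => u1S; case: (boolP (u2 \in S0)) => u2S.
    - exact: ginj.
    - have : u2 \in U :\: S0 by rewrite inE u2S.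
      move=> /hP /andP[+ _] eq; rewrite -eq inE => /andP[/negP []].
      have /andP[gW ga] := gP _ u1S.
      by rewrite /N0 inE gW; apply/existsP; exists u1; rewrite u1S.
    - have : u1 \in U :\: S0 by rewrite inE u1S.
      move=> /hP /andP[+ _] eq; rewrite eq inE => /andP[/negP []].
      have /andP[gW ga] := gP _ u2S.
      by rewrite /N0 inE gW; apply/existsP; exists u2; rewrite u2S.
    - by apply: hinj; rewrite inE ?u1S ?u2S.
  move=> u uU; case: ifP => uS; first exact: gP.
  have : u \in U :\: S0 by rewrite inE uS.
  by move=> /hP /andP[]; rewrite inE => /andP[_ ->] ->.
move/existsPn => hA.
case: (set_0Vmem U) => [U0|[u0 u0U]].
  exists (fun _ => w0); split => [u1 u2|u]; by rewrite U0 inE.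
have : (0 < #|nbh W [set u0]|)%N.
  have := hH [set u0]; rewrite sub1set u0U cards1; apply => //.
rewrite card_gt0 => /set0Pn[w1]; rewrite inE => /andP[w1W /existsP[u]].
rewrite inE => /andP[/eqP -> au0w1].
have [h [hinj hP]] : exists h : T1 -> T2, {in U :\ u0 &, injective h} /\
      (forall u, u \in U :\ u0 -> (h u \in W :\ w1) && adj u (h u)).
  apply: IH.
    by move: hU; rewrite (cardsD1 u0 U) u0U; lia.
  move=> S sS.
  case: (set_0Vmem S) => [->|[x xS]]; first by rewrite cards0.
  have := hA S; rewrite (subset_trans sS (subsetDl _ _)) /=.
  have -> : S != set0 by apply/set0Pn; exists x.
  have -> /= : S != U.
    apply/eqP=> SU; have := subsetP sS u0; rewrite SU => /(_ u0U).
    by rewrite !inE eqxx.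
  rewrite -ltnNge => lt.
  have sub : nbh W S \subset w1 |: nbh (W :\ w1) S.
    apply/subsetP=> w; rewrite !inE => /andP[wW ->].
    by rewrite wW andbT; case: (w == w1).
  have := subset_leq_card sub.
  have := leq_card_setU [set w1] (nbh (W :\ w1) S).
  rewrite cards1 ; case=> + _; lia.
exists (fun u => if u == u0 then w1 else h u); split.
  move=> u1 u2 u1U u2U /=.
  case: (eqVneq u1 u0) => [->|n1]; case: (eqVneq u2 u0) => [->|n2] //.
  - have : u2 \in U :\ u0 by rewrite !inE n2.
    by move=> /hP /andP[+ _] eq; rewrite -eq !inE eqxx.
  - have : u1 \in U :\ u0 by rewrite !inE n1.
    by move=> /hP /andP[+ _] eq; rewrite eq !inE eqxx.
  - by apply: hinj; rewrite !inE ?n1 ?n2.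
move=> v vU; case: (eqVneq v u0) => [->|nu]; first by rewrite w1W.
have : v \in U :\ u0 by rewrite !inE nu.
by move=> /hP /andP[]; rewrite !inE => /andP[_ ->] ->.
Qed.
End Hall.
Arguments nbh {T1 T2}.
Arguments hall {T1 T2}.
Arguments nbh_sub {T1 T2}.

Section Cnt.
Variables (T1 T2 : finType) (adj : T1 -> T2 -> bool).

Lemma card_sum (T : finType) (P : pred T) : #|[set x | P x]| = \sum_x (P x : nat).
Proof.
rewrite -sum1_card big_mkcond /=; apply: eq_bigr => x _; rewrite inE.
by case: (P x).
Qed.

Lemma e_double A B : e_between adj A B =
  \sum_(a : T1) \sum_(b : T2) [&& a \in A, b \in B & adj a b] :> nat.
Proof.
rewrite /e_between card_sum.
by rewrite -(pair_bigA _ (fun a b => ([&& a \in A, b \in B & adj a b] : nat))).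
Qed.

Lemma e_sum1 A B : e_between adj A B = \sum_(a in A) deg1 adj a B.
Proof.
rewrite e_double [RHS]big_mkcond /=; apply: eq_bigr => a _.
rewrite /deg1 card_sum; case: (a \in A) => /=; last by rewrite big1.
by [].
Qed.

Lemma e_sum2 A B : e_between adj A B = \sum_(b in B) deg2 adj b A.
Proof.
rewrite e_double exchange_big [RHS]big_mkcond /=; apply: eq_bigr => b _.
rewrite /deg2 card_sum; case: (b \in B) => /=.
  by apply: eq_bigr => a _; case: (a \in A).
by rewrite big1 // => a _; rewrite andbF.
Qed.
End Cnt.
Arguments e_sum1 {T1 T2}.
Arguments e_sum2 {T1 T2}.
Local Open Scope ring_scope.

Lemma num_small0 (R : rcfType) (a d n s t e : R) : 0 < a -> a <= 1 ->
  144 <= a^+2 * d -> 0 < s -> 0 < t -> t < s -> s <= a * n / 6 ->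
  a * d * s / 3 <= e ->
  `|e - d / n * s * t| < 2 * Num.sqrt (d - 1) * Num.sqrt (s * t) -> False.
Proof.
move=> a0 a1 hd s0 t0 ts sn he hm.
have n0 : 0 < n by nra.
have d1 : 1 <= d by nra.
have q0 := sqrtr_ge0 (d - 1); have q2 := sqr_sqrtr (a := d - 1) ltac:(lra).
have r0 := sqrtr_ge0 (s * t); have r2 := sqr_sqrtr (a := s * t) ltac:(nra).
move: q0 q2 r0 r2 hm; set q := Num.sqrt _; set r := Num.sqrt _ => q0 q2 r0 r2 hm.
have m1 : d / n * n = d by rewrite divfK // gt_eqF.
have m0 : 0 <= d / n by apply: divr_ge0; lra.
move: m1 m0 hm; set m := d / n => m1 m0 hm.
have h1 : e - m * s * t < 2 * q * r by apply: le_lt_trans (ler_norm _) hm.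
have h2 : m * t <= a * d / 6 by nra.
have h3 : a * d * s / 6 < 2 * q * r by nra.
have h4 : r <= s by nra.
have h5 : a * d < 12 * q by nra.
have h6 : (a * d) ^+ 2 < (12 * q) ^+ 2.
  by rewrite ltr_pXn2r // nnegrE; nra.
have h7 : 144 * d <= (a * d) ^+ 2 by nra.
nra.
Qed.

Lemma num_mid (R : rcfType) (a d n s w : R) : 0 < a -> a <= 1 -> 0 < n ->
  144 <= a^+2 * d -> a * n / 6 < s -> a * n / 6 < w ->
  `|0 - d / n * s * w| < 2 * Num.sqrt (d - 1) * Num.sqrt (s * w) -> False.
Proof.
move=> a0 a1 n0 hd sn wn hm.
have d1 : 1 <= d by nra.
have s0 : 0 < s by nra.
have w0 : 0 < w by nra.
have q0 := sqrtr_ge0 (d - 1); have q2 := sqr_sqrtr (a := d - 1) ltac:(lra).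
have r0 := sqrtr_ge0 (s * w); have r2 := sqr_sqrtr (a := s * w) ltac:(nra).
move: q0 q2 r0 r2 hm; set q := Num.sqrt _; set r := Num.sqrt _ => q0 q2 r0 r2 hm.
have m1 : d / n * n = d by rewrite divfK // gt_eqF.
have m0 : 0 <= d / n by apply: divr_ge0; lra.
move: m1 m0 hm; set m := d / n => m1 m0 hm.
have h1 : m * s * w < 2 * q * r.
  by apply: le_lt_trans hm; rewrite sub0r normrN; apply: ler_norm.
have rp : 0 < r by nra.
have h2 : d * r < 2 * n * q by nra.
have h3 : (d * r) ^+ 2 < (2 * n * q) ^+ 2.
  by rewrite ltr_pXn2r // nnegrE; nra.
have h4 : d * (s * w) < 4 * n ^+ 2 by nra.
have k : 0 < a * n / 6 by apply: divr_gt0; nra.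
have k2 : a * n / 6 * (a * n / 6) < s * w by nra.
have e6 : a * n / 6 * 6 = a * n by field.
have h5 : a ^+ 2 * n ^+ 2 < 36 * (s * w) by nra.
nra.
Qed.

Lemma num_small (R : rcfType) (a d n s t e : R) : 0 < a -> a <= 1 ->
  144 <= a^+2 * d -> 0 < s -> 0 <= t -> t < s -> s <= a * n / 6 ->
  s * (a * d / 3) <= e -> (t = 0 -> e = 0) ->
  (0 < t -> `|e - d / n * s * t| < 2 * Num.sqrt (d - 1) * Num.sqrt (s * t)) -> False.
Proof.
move=> a0 a1 hd s0 t0 ts sn he h0 hm.
case: (ltrP 0 t) => tp.
  apply: (@num_small0 R a d n s t e a0 a1 hd s0 tp ts sn) (hm tp); lra.
have t00 : t = 0 by lra.
have := h0 t00 => e0; nra.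
Qed.

Lemma sum_lb (R : rcfType) (T : finType) (S : {set T}) (k : T -> nat) (c : R) :
  (forall a, a \in S -> c <= (k a)%:R) -> #|S|%:R * c <= (\sum_(a in S) k a)%:R.
Proof.
move=> h; rewrite natr_sum mulr_natl -sumr_const; exact: ler_sum.
Qed.


Theorem proposition3p11 (R : rcfType) (alpha : R) (d n : nat)
  (T1 T2 : finType) (adj : T1 -> T2 -> bool)
  (U : {set T1}) (W : {set T2}) :
  0 < alpha -> alpha <= 1 ->
  144 / alpha ^+ 2 <= d%:R ->
  #|T1| = n -> #|T2| = n ->
  (forall u : T1, #|[set w : T2 | adj u w]| = d) ->
  (forall w : T2, #|[set u : T1 | adj u w]| = d) ->
  (forall (A : {set T1}) (B : {set T2}), A != set0 -> B != set0 ->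
     `| (e_between adj A B)%:R - d%:R / n%:R * #|A|%:R * #|B|%:R |
       < 2 * Num.sqrt (d%:R - 1 : R) * Num.sqrt (#|A|%:R * #|B|%:R : R)) ->
  #|U|%:R = alpha * n%:R -> #|W|%:R = alpha * n%:R ->
  (forall w, w \in W -> alpha * d%:R / 3 <= (deg2 adj w U)%:R) ->
  (forall u, u \in U -> alpha * d%:R / 3 <= (deg1 adj u W)%:R) ->
  has_perfect_matching adj U W.
Proof.
move=> a0 a1 hd cT1 cT2 _ _ hmix cU cW dW dU.
have a2d : 144 <= alpha ^+ 2 * d%:R.
  by move: hd; rewrite ler_pdivrMr ?exprn_gt0 // mulrC.
have cUW : #|U| = #|W|.
  by apply/eqP; rewrite -(eqr_nat R) cU cW.
case: (pickP (fun _ : T2 => true)) => [w0 _|none]; last first.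
  have c2 : #|T2| = 0%N by apply: eq_card0 => w; have := none w.
  have e1 : forall x : T1, False.
    move=> x; have := card0_eq (etrans cT1 (etrans (esym cT2) c2)) x.
    by rewrite !inE.
  have f : T1 -> T2 by move=> x; case: (e1 x).
  exists f; split.
  - by move=> x; case: (e1 x).
  - by apply/setP=> w; have := none w.
  - by move=> x; case: (e1 x).
have hallc : forall S : {set T1}, S \subset U -> (#|S| <= #|nbh adj W S|)%N.
  move=> S sSU; rewrite leqNgt; apply/negP => lt.
  set T := nbh adj W S.
  have TW : T \subset W := nbh_sub adj W S.
  have nS : (#|S| <= n)%N.
    by rewrite -cT1; apply: leq_trans (subset_leq_card sSU) (max_card _).
  have nR : 0 < n%:R :> R by rewrite ltr0n; lia.
  have sR : #|S|%:R <= alpha * n%:R :> R by rewrite -cU ler_nat subset_leq_card.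
  have tsR : #|T|%:R < #|S|%:R :> R by rewrite ltr_nat.
  have sposR : 0 < #|S|%:R :> R by rewrite ltr0n; lia.
  have nbS : forall a w, a \in S -> w \in W -> adj a w -> w \in T.
    by move=> a w aS wW aw; rewrite /T /nbh inE wW; apply/existsP; exists a; rewrite aS.
  have eST : #|S|%:R * (alpha * d%:R / 3) <= (e_between adj S T)%:R.
    rewrite e_sum1; apply: sum_lb => a aS.
    apply: le_trans (dU a (subsetP sSU a aS)) _; rewrite ler_nat /deg1.
    apply: subset_leq_card; apply/subsetP => w; rewrite inE => /andP[wW aw].
    by rewrite inE aw andbT; exact: (nbS a w aS wW aw).
  have e0 : forall (A : {set T1}) (B : {set T2}),
      (forall a b, a \in A -> b \in B -> adj a b = false) -> e_between adj A B = 0%N.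
    move=> A B h; rewrite e_sum1 big1 // => a aA; apply/eqP; rewrite cards_eq0.
    apply/eqP/setP => b; rewrite !inE.
    by case: (boolP (b \in B)) => //= bB; rewrite h.
  have nonemp : forall (X : finType) (A : {set X}), 0 < #|A|%:R :> R -> A != set0.
    by move=> X A; rewrite -card_gt0 ltr0n.
  case: (lerP (#|S|%:R) (alpha * n%:R / 6)) => sm.
    apply: (@num_small R alpha d%:R n%:R #|S|%:R #|T|%:R (e_between adj S T)%:R
              a0 a1 a2d sposR (ler0n _ _) tsR sm eST).
      move=> /eqP; rewrite pnatr_eq0 => /eqP /cards0_eq T0.
      by rewrite T0 e0 // => a b _; rewrite inE.
    by move=> tp; apply: hmix; apply: nonemp.
  set W' := W :\: T.
  have cW' : (#|T| + #|W'|)%N = #|W| by rewrite -(cardsID T W) (setIidPr TW).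
  have cW'R : #|W'|%:R = alpha * n%:R - #|T|%:R :> R.
    by rewrite -cW -cW' natrD; ring.
  have noE : forall a b, a \in S -> b \in W' -> adj a b = false.
    move=> a b aS; rewrite in_setD => /andP[bT bW]; apply/negP => ab.
    by rewrite (nbS a b aS bW ab) in bT.
  case: (lerP (#|W'|%:R) (alpha * n%:R / 6)) => wm; last first.
    have h := hmix S W'; rewrite (e0 _ _ noE) in h.
    apply: (@num_mid R alpha d%:R n%:R #|S|%:R #|W'|%:R a0 a1 nR a2d sm wm).
    by apply: h; apply: nonemp; lra.
  set B' := U :\: S.
  have cB' : (#|S| + #|B'|)%N = #|U| by rewrite -(cardsID S U) (setIidPr sSU).
  have cB'R : #|B'|%:R = alpha * n%:R - #|S|%:R :> R.
    by rewrite -cU -cB' natrD; ring.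
  have wpos : 0 < #|W'|%:R :> R by lra.
  have eB : #|W'|%:R * (alpha * d%:R / 3) <= (e_between adj B' W')%:R.
    rewrite e_sum2; apply: sum_lb => b bW'.
    have bW : b \in W by move: bW'; rewrite inE => /andP[].
    apply: le_trans (dW b bW) _; rewrite ler_nat /deg2.
    apply: subset_leq_card; apply/subsetP => u; rewrite !inE => /andP[uU ub].
    rewrite uU ub !andbT; apply/negP => uS.
    by rewrite (noE u b uS bW') in ub.
  apply: (@num_small R alpha d%:R n%:R #|W'|%:R #|B'|%:R (e_between adj B' W')%:R
            a0 a1 a2d wpos (ler0n _ _) _ wm eB).
  - lra.
  - move=> /eqP; rewrite pnatr_eq0 => /eqP /cards0_eq B0.
    by rewrite B0 e0 // => a b; rewrite inE.
  - move=> tp; rewrite mulrAC (mulrC #|W'|%:R #|B'|%:R); apply: hmix; apply: nonemp => //.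
have [f [finj fP]] := hall adj w0 #|U| U W (leqnn #|U|) hallc.
exists f; split => //; last by move=> u /fP /andP[].
apply/eqP; rewrite eqEcard card_in_imset // cUW leqnn andbT.
by apply/subsetP=> w /imsetP[u uU ->]; case/andP: (fP u uU).
Qed.
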